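(* Let $m,n,k$ be positive integers with $k<n$, $A\in\mathbb{R}^{m\times n}$, $x^*\in\mathbb{R}^n$ with support $S^*$ satisfying $1\le|S^*|\le k$, $e\in\mathbb{R}^m$, $y=Ax^*+e$. Let $\mathcal{X}^0\in\mathbb{R}^n$, $\eta>0$, let $(S^t,x^t,\mathcal{X}^t)_{t\ge0}$ be generated by SEA, $b^t=u^t-\eta A^T(Ax^t-y)$ and $B=\sup_{t\in\mathbb{N}}\|b^t\|_\infty$. If $$B<\frac{1}{2\sum_{i\in S^*}\frac{1}{\eta|x^*_i|}},$$ then there exists an integer $t_s\le T'_{max}$ such that $S^*\subseteq S^{t_s}$, where $$T'_{max}=\frac{\sum_{i\in S^*}\frac{\max_{j\notin S^*}|\mathcal{X}^0_j|+|\mathcal{X}^0_i|}{\eta|x^*_i|}+k+1}{1-2B\sum_{i\in S^*}\frac{1}{\eta|x^*_i|}}.$$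
   Context: $S^*=\{i:x^*_i\neq0\}$. For $v\in\mathbb{R}^n$, $\mathrm{largest}_k(v)$ is the set of indices of the $k$ entries of $v$ with largest absolute value (ties broken by selecting the highest indices). For $S\subseteq\{1,\dots,n\}$, $A_S$ is the submatrix of columns indexed by $S$, $v_S$ the restriction of a vector to $S$, $A_S^\dagger$ the Moore–Penrose pseudoinverse of $A_S$. SEA with initialization $\mathcal{X}^0$ and step size $\eta$ generates, for $t=0,1,2,\dots$: $S^t=\mathrm{largest}_k(\mathcal{X}^t)$; $x^t_i=0$ for $i\notin S^t$ and $x^t_{S^t}=A_{S^t}^\dagger y$; $\mathcal{X}^{t+1}=\mathcal{X}^t-\eta A^T(Ax^t-y)$. The oracle direction is $u^t_i=-\eta x^*_i$ if $i\in S^*\setminus S^t$ and $u^t_i=0$ otherwise. *)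

(* Defs.v *)
From HB Require Import structures.
From mathcomp Require Import all_boot all_order all_algebra.
From mathcomp Require Import all_classical all_reals.
From mathcomp Require Import ereal.
Set Implicit Arguments. Unset Strict Implicit. Unset Printing Implicit Defensive.
Import Order.TTheory GRing.Theory Num.Theory.
Local Open Scope ring_scope.

Section SEA.
Variable R : realType.

Definition beats n (v : 'cV[R]_n) (j i : 'I_n) : bool :=
  (`|v i 0| < `|v j 0|) || ((`|v j 0| == `|v i 0|) && (i < j)%N).

(* largest_k(v): the k indices with largest |v_i|, ties broken by selecting
   the highest indices; i is selected iff fewer than k indices beat it. *)
Definition largest_k n (k : nat) (v : 'cV[R]_n) : {set 'I_n} :=
  [set i | #|[set j | beats v j i]| < k]%N.

Definition supp n (v : 'cV[R]_n) : {set 'I_n} := [set i | v i 0 != 0].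

Definition colsubS m n (A : 'M[R]_(m, n)) (S : {set 'I_n}) : 'M[R]_(m, #|S|) :=
  colsub (fun j : 'I_#|S| => enum_val j) A.

(* P is the Moore–Penrose pseudoinverse of M (the four Penrose conditions,
   which determine P uniquely) *)
Definition is_MP_pinv p q (M : 'M[R]_(p, q)) (P : 'M[R]_(q, p)) : Prop :=
  [/\ M *m P *m M = M, P *m M *m P = P,
      (M *m P)^T = M *m P & (P *m M)^T = P *m M].

Definition SEA_iterates m n (k : nat) (A : 'M[R]_(m, n)) (y : 'cV[R]_m)
    (eta : R) (S : nat -> {set 'I_n}) (x X : nat -> 'cV[R]_n) : Prop :=
  forall t : nat,
    [/\ S t = largest_k k (X t),
        (forall i, i \notin S t -> x t i 0 = 0),
        (exists P : 'M[R]_(#|S t|, m),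
            is_MP_pinv (colsubS A (S t)) P /\
            forall j : 'I_#|S t|, x t (enum_val j) 0 = (P *m y) j 0)
      & X t.+1 = X t - eta *: (A^T *m (A *m x t - y))].

Definition oracle n (eta : R) (xstar : 'cV[R]_n) (St : {set 'I_n}) : 'cV[R]_n :=
  \col_i (if (i \in supp xstar) && (i \notin St) then - eta * xstar i 0 else 0).

Definition norm_inf n (v : 'cV[R]_n) : R := \big[Num.max/0]_i `|v i 0|.

End SEA.

(* Main.v *)
Require Import Defs.
From HB Require Import structures.
From mathcomp Require Import all_boot all_order all_algebra.
From mathcomp Require Import all_classical all_reals.
From mathcomp Require Import ereal ring lra zify.
Import Order.TTheory GRing.Theory Num.Theory.
Local Open Scope classical_set_scope.
Local Open Scope ring_scope.

Lemma norm_bounds {R : realType} (v : R) : - `|v| <= v /\ v <= `|v|.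
Proof. split; last exact: ler_norm. by rewrite lerNl -normrN ler_norm. Qed.

Theorem theoremC6 (R : realType) (m n k : nat)
    (A : 'M[R]_(m, n)) (xstar : 'cV[R]_n) (e : 'cV[R]_m) (eta : R)
    (S : nat -> {set 'I_n}) (x X : nat -> 'cV[R]_n) :
  (0 < m)%N -> (0 < k)%N -> (k < n)%N ->
  (1 <= #|supp xstar|)%N -> (#|supp xstar| <= k)%N ->
  0 < eta ->
  SEA_iterates k A (A *m xstar + e) eta S x X ->
  let y := A *m xstar + e in
  let b := fun t : nat =>
    oracle eta xstar (S t) - eta *: (A^T *m (A *m x t - y)) in
  let B : \bar R := ereal_sup [set (norm_inf (b t))%:E | t in [set: nat]] in
  let sigma := \sum_(i in supp xstar) (eta * `|xstar i 0|)^-1 in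
  (B < ((2 * sigma)^-1)%:E)%E ->
  let Tmax :=
    ((\sum_(i in supp xstar)
        (\big[Num.max/0]_(j | j \notin supp xstar) `|X 0%N j 0| + `|X 0%N i 0|)
          / (eta * `|xstar i 0|))
     + k%:R + 1) / (1 - 2 * fine B * sigma) in
  exists ts : nat, ts%:R <= Tmax /\ supp xstar \subset S ts.
Proof.
move=> hm hk hkn hs1 hsk heta hSEA y b B sigma hB Tmax.
have hnb : forall t i, `|b t i 0| <= norm_inf (b t).
  by move=> t i; rewrite /norm_inf; exact: le_bigmax.
have hBge : forall t, ((norm_inf (b t))%:E <= B)%E.
  by move=> t; apply: ereal_sup_ubound; exists t.
have hB0 : (0 <= B)%E.
  apply: le_trans (hBge 0%N); rewrite lee_fin.
  by apply: le_trans (hnb 0%N (Ordinal (leq_ltn_trans (leq0n k) hkn))).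
have hBfin : B = (fine B)%:E.
  have gen : forall z : \bar R, (0 <= z)%E -> (z < ((2 * sigma)^-1)%:E)%E ->
    z = (fine z)%:E by case.
  exact: gen.
have hbB : forall t i, `|b t i 0| <= fine B.
  move=> t i; apply: le_trans (hnb t i) _.
  by have := hBge t; rewrite hBfin lee_fin.
have hBf0 : 0 <= fine B by move: hB0; rewrite hBfin lee_fin.
have hBlt : fine B < (2 * sigma)^-1 by move: hB; rewrite hBfin lte_fin.
set Bf := fine B in hbB hBf0 hBlt *.
have hX : forall t i, X t.+1 i 0 =
    X t i 0 + b t i 0 - oracle eta xstar (S t) i 0.
  move=> t i; have [_ _ _ ->] := hSEA t.
  have -> : X t - eta *: (A^T *m (A *m x t - (A *m xstar + e)))
     = X t + b t - oracle eta xstar (S t).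
    by rewrite /b /y (addrC (oracle _ _ _)) addrA addrK.
  by rewrite !mxE.
have hor : forall t i, oracle eta xstar (S t) i 0 =
    if (i \in supp xstar) && (i \notin S t) then - eta * xstar i 0 else 0.
  by move=> t i; rewrite /oracle mxE.
have hup : forall j, j \notin supp xstar -> forall t : nat,
    `|X t j 0| <= `|X 0%N j 0| + t%:R * Bf.
  move=> j hj; elim=> [|t IH]; first by rewrite mul0r addr0.
  rewrite hX hor (negbTE hj) /= subr0.
  have := ler_normD (X t j 0) (b t j 0); have := hbB t j.
  rewrite -natr1; lra.
set M0 := \big[Num.max/0]_(j | j \notin supp xstar) `|X 0%N j 0|.
have hM0 : forall j, j \notin supp xstar -> `|X 0%N j 0| <= M0.
  by move=> j hj; rewrite /M0; exact: le_bigmax_cond.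
have hM00 : 0 <= M0 by rewrite /M0; exact: bigmax_ge_id.
have hkey : forall t i, i \in supp xstar -> i \notin S t ->
    `|X t i 0| <= M0 + t%:R * Bf.
  move=> t i hi hit.
  have [hSt _ _ _] := hSEA t.
  move: hit; rewrite hSt finset.inE -leqNgt => hcard.
  case: (boolP [exists j, beats (X t) j i && (j \notin supp xstar)]).
    move=> /existsP [j /andP [hb hj]].
    have hij : `|X t i 0| <= `|X t j 0|.
      move: hb; rewrite /beats => /orP [/ltW //|/andP [/eqP -> _] //].
    apply: le_trans hij _; apply: le_trans (hup j hj t) _.
    by rewrite lerD2r hM0.
  rewrite negb_exists => /forallP hall.
  have hsub : [set j | beats (X t) j i]%SET \subset supp xstar :\ i.
    apply/fintype.subsetP => j; rewrite finset.inE => hb; rewrite in_setD1.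
    have := hall j; rewrite hb /= negbK => ->; rewrite andbT.
    apply/eqP => eji; move: hb; rewrite eji /beats ltxx ltnn andbF.
    by [].
  have h := subset_leq_card hsub.
  have hc := cardsD1 i (supp xstar); rewrite hi /= in hc.
  have h2 := leq_trans hcard h.
  move: hsk; rewrite hc add1n => h3.
  by have := leq_trans h3 h2; rewrite ltnn.
pose N := fun (i : 'I_n) (T : nat) =>
  \sum_(t < T) (if i \in S t then 0 else 1 : R).
have hNi : forall i, i \in supp xstar -> forall T : nat,
    N i T <= (M0 + `|X 0%N i 0|) / (eta * `|xstar i 0|)
             + 2 * T%:R * Bf * (eta * `|xstar i 0|)^-1 + 1.
  move=> i hi.
  have hx0 : xstar i 0 != 0 by move: hi; rewrite finset.inE.
  set c := eta * `|xstar i 0|.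
  have hc : 0 < c by rewrite /c mulr_gt0 // normr_gt0.
  pose s : R := if 0 <= xstar i 0 then 1 else -1.
  have hs : s * xstar i 0 = `|xstar i 0|.
    rewrite /s; case: ifP => h.
      by rewrite mul1r ger0_norm.
    by rewrite mulN1r ltr0_norm // ltNge h.
  have hsv : forall v, - `|v| <= s * v /\ s * v <= `|v|.
    move=> v; rewrite /s; case: ifP => _; rewrite ?mul1r ?mulN1r.
      exact: norm_bounds.
    have [h1 h2] := norm_bounds v; split; lra.
  have hlow : forall t : nat,
      - `|X 0%N i 0| + N i t * c - t%:R * Bf <= s * X t i 0.
    elim=> [|t IH].
      rewrite /N big_ord0 mul0r mul0r addr0 subr0.
      by have [] := hsv (X 0%N i 0).
    rewrite hX hor hi /= /N big_ord_recr /= -/(N i t) -natr1.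
    have [h1 _] := hsv (b t i 0).
    have hb := hbB t i.
    case: ifP => hit /=.
      rewrite subr0 addr0 mulrDr; lra.
    have -> : s * (X t i 0 + b t i 0 - - eta * xstar i 0)
        = s * X t i 0 + s * b t i 0 + eta * (s * xstar i 0) by ring.
    rewrite hs -/c; lra.
  have hN : forall T : nat,
      N i T * c <= M0 + `|X 0%N i 0| + 2 * T%:R * Bf + c.
    elim=> [|T IH].
      rewrite /N big_ord0 mul0r; have := normr_ge0 (X 0%N i 0); lra.
    rewrite /N big_ord_recr /= -/(N i T) -natr1.
    case: ifP => hiT.
      rewrite addr0; lra.
    have h1 := hlow T.
    have h2 := hkey T i hi (negbT hiT).
    have [_ h3] := hsv (X T i 0).
    lra.
  move=> T; rewrite -(ler_pM2r hc) !mulrDl !divfK ?gt_eqF // mul1r.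
  have := hN T; lra.
have hsig : 0 < sigma.
  have [i0 hi0] : exists i0, i0 \in supp xstar by apply/card_gt0P.
  rewrite /sigma (bigD1 i0) //=.
  have h1 : 0 < (eta * `|xstar i0 0|)^-1.
    by rewrite invr_gt0 mulr_gt0 // normr_gt0; move: hi0; rewrite finset.inE.
  apply: (lt_le_trans h1); rewrite lerDl; apply: sumr_ge0 => i _.
  by rewrite invr_ge0 mulr_ge0 // ltW.
have hD : 0 < 1 - 2 * Bf * sigma.
  have h2s : 0 < 2 * sigma by rewrite mulr_gt0.
  move: hBlt; rewrite -(ltr_pM2r h2s) mulVf ?gt_eqF // => h; lra.
set Cs := \sum_(i in supp xstar) (M0 + `|X 0%N i 0|) / (eta * `|xstar i 0|).
have hTdef : Tmax = (Cs + k%:R + 1) / (1 - 2 * Bf * sigma) by [].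
have hCs : 0 <= Cs.
  apply: sumr_ge0 => i _; apply: divr_ge0; first exact: addr_ge0.
  by rewrite mulr_ge0 // ltW.
have hk0 : 0 <= k%:R :> R by rewrite ler0n.
have hT0 : 0 <= Tmax by rewrite hTdef divr_ge0 // ?ltW //; lra.
set T := Num.truncn Tmax.
have hTle : T%:R <= Tmax by rewrite truncn_le.
have hTgt : Tmax < T%:R + 1 by rewrite natr1 truncnS_gt.
case: (boolP [exists t : 'I_T, supp xstar \subset S t]).
  move=> /existsP [t ht]; exists (val t); split => //.
  apply: le_trans hTle; rewrite ler_nat; exact: (ltnW (ltn_ord t)).
rewrite negb_exists => /forallP hall.
have hup2 : \sum_(i in supp xstar) N i T
    <= Cs + 2 * T%:R * Bf * sigma + #|supp xstar|%:R.
  apply: le_trans (ler_sum _ (fun i hi => hNi i hi T)) _.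
  rewrite !big_split /= sumr_const /sigma mulr_sumr.
  exact: le_refl.
have hlo : T%:R <= \sum_(i in supp xstar) N i T.
  rewrite /N exchange_big /=.
  have -> : T%:R = \sum_(t < T) (1 : R) by rewrite sumr_const card_ord.
  apply: ler_sum => t _.
  have [i hi hit] := subsetPn (hall t).
  rewrite (bigD1 i) //= (negbTE hit) lerDl.
  by apply: sumr_ge0 => j _; case: ifP.
have hk' : #|supp xstar|%:R <= k%:R :> R by rewrite ler_nat.
move: hTgt; rewrite hTdef ltr_pdivrMr // => hlt.
have hBs : 0 <= Bf * sigma by rewrite mulr_ge0 // ltW.
exfalso; nra.
Qed.
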